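(* The set of vertices of any simplex $\sigma$ of $X(\mathcal G)$ admits a cyclic order that is preserved by the stabilizer $\mathrm{Stab}(\sigma)<\mathcal G$.
   Context: Let $\mathcal A$ be an Artin group of finite type with generating set $S$ and associated finite Coxeter group $\mathcal W$; $\mathcal A^+$ is the submonoid generated by $S$, and $x<y$ means $y=xz$ with $z\in\mathcal A^+$. An atom is an element of $\mathcal A^+$ whose $S$-word length equals the length of its image in $\mathcal W$; $\Delta$ is the atom mapping to the longest element of $\mathcal W$ ($\Delta^2$ central). For $g\in\mathcal A^+$, $\alpha(g)$ is the largest (for $<$) atom with $\alpha(g)<g$; the normal form of $g$ is $g=A_1\cdot\ldots\cdot A_k$ with nontrivial atoms and $A_i=\alpha(A_i\cdots A_k)$. Let $\mathcal G=\mathcal A/\langle\Delta^2\rangle$ act on $V=\mathcal A/\langle\Delta\rangle$ by left multiplication, $*=\langle\Delta\rangle$. Each $v\in V$ has a unique special representative in $\mathcal A^+$ whose normal form contains no $\Delta$; $|v|$ is its number of atoms and $d_{at}(v,w)=|g^{-1}w|$ for $g( * )=v$. $X(\mathcal G)$ is the simplicial complex on $V$ whose simplices are finite vertex sets pairwise at $d_{at}=1$; $\mathcal G$ acts on it simplicially. *)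

(* Defs.v *)
From mathcomp Require Import all_boot.
Set Implicit Arguments. Unset Strict Implicit. Unset Printing Implicit Defensive.

(* Generators S = 'I_n.  A letter (s, true) is s, (s, false) is s^-1. *)
Definition letter (n : nat) := ('I_n * bool)%type.
Definition word (n : nat) := seq (letter n).
Definition pos (n : nat) (p : seq 'I_n) : word n := [seq (s, true) | s <- p].
Definition winv (n : nat) (w : word n) : word n := rev [seq (x.1, ~~ x.2) | x <- w].

Fixpoint alt (n : nat) (s t : 'I_n) (k : nat) : seq 'I_n :=
  if k is k'.+1 then s :: alt t s k' else [::].

(* Coxeter matrix (finite entries; finite type forces this anyway). *)
Definition coxeter_matrix (n : nat) (M : 'I_n -> 'I_n -> nat) : Prop :=
  (forall i, M i i = 1) /\ (forall i j, M i j = M j i) /\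
  (forall i j, i != j -> 2 <= M i j).

Inductive aeq (n : nat) (M : 'I_n -> 'I_n -> nat) : word n -> word n -> Prop :=
| aeq_refl w : aeq M w w
| aeq_sym u v : aeq M u v -> aeq M v u
| aeq_trans u v w : aeq M u v -> aeq M v w -> aeq M u w
| aeq_cancel u v s b : aeq M (u ++ (s, b) :: (s, ~~ b) :: v) (u ++ v)
| aeq_braid u v s t : s != t ->
    aeq M (u ++ pos (alt s t (M s t)) ++ v) (u ++ pos (alt t s (M s t)) ++ v).

(* Equality in the Coxeter group W (words in S suffice since s^-1 = s). *)
Inductive weq (n : nat) (M : 'I_n -> 'I_n -> nat) : seq 'I_n -> seq 'I_n -> Prop :=
| weq_refl w : weq M w w
| weq_sym u v : weq M u v -> weq M v u
| weq_trans u v w : weq M u v -> weq M v w -> weq M u w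
| weq_sq u v s : weq M (u ++ s :: s :: v) (u ++ v)
| weq_braid u v s t : s != t ->
    weq M (u ++ alt s t (M s t) ++ v) (u ++ alt t s (M s t) ++ v).

Definition wlen (n : nat) (M : 'I_n -> 'I_n -> nat) (u : seq 'I_n) (k : nat) : Prop :=
  (exists v, weq M u v /\ size v = k) /\ (forall v, weq M u v -> k <= size v).

Definition finite_type (n : nat) (M : 'I_n -> 'I_n -> nat) : Prop :=
  exists ws : seq (seq 'I_n), forall u, exists2 v, v \in ws & weq M u v.

Definition is_pos (n : nat) M (g : word n) : Prop := exists p, aeq M g (pos p).

Definition prec (n : nat) M (x y : word n) : Prop := exists p, aeq M y (x ++ pos p).

Definition atom (n : nat) M (g : word n) : Prop :=
  exists p, aeq M g (pos p) /\ wlen M p (size p).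

Definition isDelta (n : nat) M (d : seq 'I_n) : Prop :=
  atom M (pos d) /\ forall u k, wlen M u k -> k <= size d.

Definition is_alpha (n : nat) M (g a : word n) : Prop :=
  atom M a /\ prec M a g /\ forall b, atom M b -> prec M b g -> prec M b a.

Definition normal_form (n : nat) M (g : word n) (As : seq (word n)) : Prop :=
  aeq M g (flatten As) /\
  forall i, i < size As ->
    atom M (nth [::] As i) /\ ~ aeq M (nth [::] As i) [::] /\
    is_alpha M (flatten (drop i As)) (nth [::] As i).

Definition dpow (n : nat) (d : seq 'I_n) (k : nat) : word n := flatten (nseq k (pos d)).

(* x<Delta> = y<Delta>: vertices of V = A/<Delta> represented by words *)
Definition veq (n : nat) M (d : seq 'I_n) (x y : word n) : Prop :=
  exists k, aeq M y (x ++ dpow d k) \/ aeq M x (y ++ dpow d k).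

Definition vlen (n : nat) M (d : seq 'I_n) (x : word n) (k : nat) : Prop :=
  exists h As, is_pos M h /\ veq M d x h /\ normal_form M h As /\
    (forall A, A \in As -> ~ aeq M A (pos d)) /\ size As = k.

Definition d_at (n : nat) M (d : seq 'I_n) (x y : word n) (k : nat) : Prop :=
  vlen M d (winv x ++ y) k.

Definition simplex (n : nat) M (d : seq 'I_n) (sigma : seq (word n)) : Prop :=
  forall i j, i < size sigma -> j < size sigma -> i != j ->
    ~ veq M d (nth [::] sigma i) (nth [::] sigma j) /\
    d_at M d (nth [::] sigma i) (nth [::] sigma j) 1.

(* g (an element of G = A/<Delta^2>, represented by a word) lies in Stab(sigma) *)
Definition stab (n : nat) M (d : seq 'I_n) (g : word n) (sigma : seq (word n)) : Prop :=
  (forall x, x \in sigma -> exists2 y, y \in sigma & veq M d (g ++ x) y) /\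
  (forall y, y \in sigma -> exists2 x, x \in sigma & veq M d (g ++ x) y).

(* Main.v *)
Require Import Defs.
From mathcomp Require Import all_boot.
From HB Require Import structures.
From mathcomp Require Import all_algebra all_field.
From mathcomp Require Import ring lra zify.
From Stdlib Require Import ClassicalEpsilon FunctionalExtensionality PropExtensionality ProofIrrelevance Classical.
Set Implicit Arguments. Unset Strict Implicit. Unset Printing Implicit Defensive.


Section Weq.
Variable n : nat.
Variable M : 'I_n -> 'I_n -> nat.
Local Notation weq := (weq M).

Lemma weq_r u : weq u u. Proof. exact: weq_refl. Qed.
Lemma weq_s u v : weq u v -> weq v u. Proof. exact: weq_sym. Qed.
Lemma weq_t u v w : weq u v -> weq v w -> weq u w. Proof. exact: weq_trans. Qed.

Lemma weq_catl x u v : weq u v -> weq (x ++ u) (x ++ v).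
Proof.
elim=> //.
- by move=> *; apply: weq_refl.
- by move=> *; apply: weq_sym.
- by move=> u1 v1 w1 _ H1 _ H2; apply: weq_trans H1 H2.
- by move=> u1 v1 s; rewrite !catA; apply: weq_sq.
- by move=> u1 v1 s t st; rewrite !(catA x u1); apply: weq_braid.
Qed.

Lemma weq_catr x u v : weq u v -> weq (u ++ x) (v ++ x).
Proof.
elim=> //.
- by move=> *; apply: weq_refl.
- by move=> *; apply: weq_sym.
- by move=> u1 v1 w1 _ H1 _ H2; apply: weq_trans H1 H2.
- by move=> u1 v1 s; rewrite -!catA /=; apply: weq_sq.
- by move=> u1 v1 s t st; rewrite -!catA; apply: weq_braid.
Qed.

Lemma weq_cat u u' v v' : weq u u' -> weq v v' -> weq (u ++ v) (u' ++ v').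
Proof. move=> H1 H2; apply: weq_trans (weq_catr _ H1) (weq_catl _ H2). Qed.

Lemma alt_rcons (s t : 'I_n) k : alt s t k.+1 = rcons (alt s t k) (if odd k then t else s).
Proof.
elim: k s t => [|k IH] s t; first by [].
have -> : alt s t k.+2 = s :: alt t s k.+1 by [].
rewrite IH. have -> : alt s t k.+1 = s :: alt t s k by [].
by rewrite rcons_cons /=; case: (odd k).
Qed.

Lemma size_alt (s t : 'I_n) k : size (alt s t k) = k.
Proof. by elim: k s t => [|k IH] s t //=; rewrite IH. Qed.

Lemma rev_alt (s t : 'I_n) k : rev (alt s t k) = if odd k then alt s t k else alt t s k.
Proof.
elim: k s t => [|k IH] s t; first by [].
have -> : alt s t k.+1 = s :: alt t s k by [].
rewrite rev_cons IH /=; case: (boolP (odd k)) => ok /=.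
- by rewrite (_ : rcons (alt t s k) s = alt t s k.+1) // alt_rcons ok.
- by rewrite (_ : rcons (alt s t k) s = alt s t k.+1) // alt_rcons (negbTE ok).
Qed.

Lemma alt_add (s t : 'I_n) a b :
  alt s t (a + b) = alt s t a ++ (if odd a then alt t s b else alt s t b).
Proof.
elim: a s t => [|a IH] s t //=.
by rewrite IH; case: (odd a).
Qed.

Lemma weq_rev u v : weq u v -> weq (rev u) (rev v).
Proof.
elim=> //.
- by move=> *; apply: weq_refl.
- by move=> *; apply: weq_sym.
- by move=> u1 v1 w1 _ H1 _ H2; apply: weq_trans H1 H2.
- move=> u1 v1 s; rewrite !rev_cat !rev_cons /=.
  rewrite -!cats1 -!catA /=. exact: weq_sq.
- move=> u1 v1 s t st; rewrite !rev_cat !rev_alt -!catA.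
  case: (odd (M s t)).
  + apply: weq_braid st.
  + apply: weq_sym; apply: weq_braid st.
Qed.

Lemma weq_odd u v : weq u v -> odd (size u) = odd (size v).
Proof.
elim=> //.
- by move=> u1 v1 w1 _ -> _ ->.
- by move=> u1 v1 s; rewrite !size_cat /= !addnS /= negbK.
- by move=> u1 v1 s t _; rewrite !size_cat !size_alt.
Qed.

Lemma weq_cancel u : weq (u ++ rev u) [::].
Proof.
elim: u => [|s u IH] /=; first exact: weq_refl.
rewrite rev_cons -cats1.
have -> : s :: u ++ rev u ++ [:: s] = [:: s] ++ (u ++ rev u) ++ [:: s] by rewrite /= catA.
apply: weq_trans (_ : weq ([:: s] ++ [::] ++ [:: s]) _).
  by apply: weq_catl; apply: weq_catr.
by have := @weq_sq n M [::] [::] s; rewrite /=.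
Qed.

End Weq.


Section Wgrp.
Variable n : nat.
Variable M : 'I_n -> 'I_n -> nat.
Local Notation weq := (weq M).

Definition Wt := {P : seq 'I_n -> Prop | exists w, P = weq w}.
Definition cls (w : seq 'I_n) : Wt := exist _ (weq w) (ex_intro _ w erefl).

Lemma cls_eq u v : (cls u = cls v) <-> weq u v.
Proof.
split.
- move/(f_equal (@proj1_sig _ _)) => /= E.
  have H : weq u u by apply: weq_refl.
  rewrite E in H; exact: weq_sym H.
- move=> H.
  have E : weq u = weq v.
    apply: functional_extensionality => w; apply: propositional_extensionality.
    split => H'; [apply: weq_trans (weq_sym H) H' | apply: weq_trans H H'].
  have gen : forall (P Q : seq 'I_n -> Prop) (p : exists w, P = weq w) (q : exists w, Q = weq w),
    P = Q -> exist (fun P => exists w, P = weq w) P p = exist _ Q q.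
    by move=> P Q p q PQ; subst Q; rewrite (proof_irrelevance _ p q).
  exact: gen.
Qed.

Lemma cls_weq u v : weq u v -> cls u = cls v.
Proof. by move/cls_eq. Qed.

Lemma clsP (a : Wt) : exists u, a = cls u.
Proof.
case: a => P [w E]; exists w; subst P.
by rewrite /cls; congr exist; apply: proof_irrelevance.
Qed.

Definition Wt_eqb (a b : Wt) : bool :=
  if excluded_middle_informative (a = b) then true else false.
Lemma Wt_eqP : Equality.axiom Wt_eqb.
Proof.
move=> a b; rewrite /Wt_eqb; case: excluded_middle_informative => H.
- by constructor.
- by constructor.
Qed.
HB.instance Definition _ := hasDecEq.Build Wt Wt_eqP.

Definition wrepr (a : Wt) : seq 'I_n :=
  proj1_sig (constructive_indefinite_description _ (clsP a)).
Lemma wreprK a : cls (wrepr a) = a.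
Proof.
rewrite /wrepr; case: constructive_indefinite_description => u /= E.
by rewrite E.
Qed.

Definition wm (a b : Wt) : Wt := cls (wrepr a ++ wrepr b).
Definition wi (a : Wt) : Wt := cls (rev (wrepr a)).
Definition w1 : Wt := cls [::].
Definition g (s : 'I_n) : Wt := cls [:: s].

Lemma cls_cat u v : cls (u ++ v) = wm (cls u) (cls v).
Proof.
rewrite /wm; apply: cls_weq; apply: weq_cat; apply/cls_eq; by rewrite wreprK.
Qed.

Lemma cls_cons s u : cls (s :: u) = wm (g s) (cls u).
Proof. by rewrite -cls_cat. Qed.

Lemma wi_cls u : wi (cls u) = cls (rev u).
Proof.
rewrite /wi; apply: cls_weq; apply: weq_rev; apply/cls_eq; by rewrite wreprK.
Qed.

Lemma wmA a b c : wm a (wm b c) = wm (wm a b) c.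
Proof.
have [u ->] := clsP a; have [v ->] := clsP b; have [w ->] := clsP c.
by rewrite -!cls_cat catA.
Qed.

Lemma wm1l a : wm w1 a = a.
Proof. have [u ->] := clsP a. by rewrite -cls_cat. Qed.
Lemma wm1r a : wm a w1 = a.
Proof. have [u ->] := clsP a. by rewrite -cls_cat cats0. Qed.

Lemma wmV a : wm a (wi a) = w1.
Proof.
have [u ->] := clsP a. rewrite wi_cls -cls_cat; apply: cls_weq; exact: weq_cancel.
Qed.
Lemma wVm a : wm (wi a) a = w1.
Proof.
have [u ->] := clsP a. rewrite wi_cls -cls_cat; apply: cls_weq.
have := weq_cancel M (rev u); by rewrite revK.
Qed.

Lemma wiK a : wi (wi a) = a.
Proof. have [u ->] := clsP a. by rewrite !wi_cls revK. Qed.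

Lemma wi_mul a b : wi (wm a b) = wm (wi b) (wi a).
Proof.
have [u ->] := clsP a; have [v ->] := clsP b.
by rewrite -cls_cat !wi_cls -cls_cat rev_cat.
Qed.

Lemma wi_g s : wi (g s) = g s.
Proof. by rewrite /g wi_cls. Qed.

Lemma gg s : wm (g s) (g s) = w1.
Proof.
rewrite -cls_cat; apply: cls_weq.
by have := @weq_sq n M [::] [::] s.
Qed.

Lemma wm_cancel_l a b c : wm a b = wm a c -> b = c.
Proof.
move=> E. by rewrite -(wm1l b) -(wm1l c) -(wVm a) -!wmA E.
Qed.

Lemma wm_cancel_r a b c : wm b a = wm c a -> b = c.
Proof.
move=> E. by rewrite -(wm1r b) -(wm1r c) -(wmV a) !wmA E.
Qed.

Lemma wm_invl a b c : wm a b = c -> b = wm (wi a) c.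
Proof. by move<-; rewrite wmA wVm wm1l. Qed.

Lemma wi_uniq a b : wm a b = w1 -> b = wi a.
Proof. by move/wm_invl; rewrite wm1r. Qed.

Definition cnj (a t : Wt) : Wt := wm (wm a t) (wi a).

Lemma cnj_mul a b t : cnj (wm a b) t = cnj a (cnj b t).
Proof. by rewrite /cnj wi_mul !wmA. Qed.

Lemma wi1 : wi w1 = w1.
Proof. by rewrite /w1 wi_cls. Qed.

Lemma cnj1 t : cnj w1 t = t.
Proof. by rewrite /cnj wi1 wm1l wm1r. Qed.

Lemma cnjK a t : cnj (wi a) (cnj a t) = t.
Proof. by rewrite -cnj_mul wVm cnj1. Qed.

Lemma cnjKV a t : cnj a (cnj (wi a) t) = t.
Proof. by have := cnjK (wi a) t; rewrite wiK. Qed.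

Lemma cnj_inj a : injective (cnj a).
Proof. by move=> x y E; rewrite -(cnjK a x) E cnjK. Qed.

Lemma cnj_g_g s : cnj (g s) (g s) = g s.
Proof. by rewrite /cnj gg wm1l wi_g. Qed.

Lemma cnj_cls x t : cnj (cls x) (cls t) = cls (x ++ t ++ rev x).
Proof. by rewrite /cnj wi_cls -!cls_cat catA. Qed.

Fixpoint tseq (q : seq 'I_n) : seq Wt :=
  if q is s :: q' then g s :: map (cnj (g s)) (tseq q') else [::].

Definition nc (q : seq 'I_n) (t : Wt) := count_mem t (tseq q).

Lemma size_tseq q : size (tseq q) = size q.
Proof. by elim: q => //= s q IH; rewrite size_map IH. Qed.

Lemma tseq_cat u v : tseq (u ++ v) = tseq u ++ map (cnj (cls u)) (tseq v).
Proof.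
elim: u => [|s u IH] /=.
  by rewrite -{1}(map_id (tseq v)); apply: eq_map => x; rewrite -/w1 cnj1.
rewrite IH map_cat -map_comp; congr (_ :: _ ++ _).
by apply: eq_map => x /=; rewrite cls_cons cnj_mul.
Qed.

Lemma count_map_cnj a t s : count_mem t (map (cnj a) s) = count_mem (cnj (wi a) t) s.
Proof.
rewrite count_map; apply: eq_count => x /=.
apply/eqP/eqP => [<-|->]; [by rewrite cnjK | by rewrite cnjKV].
Qed.

Lemma nc_cat u v t : nc (u ++ v) t = nc u t + nc v (cnj (wi (cls u)) t).
Proof. by rewrite /nc tseq_cat count_cat count_map_cnj. Qed.

End Wgrp.


Section Par.
Variable n : nat.
Variable M : 'I_n -> 'I_n -> nat.
Local Notation weq := (weq M).
Local Notation cls := (@cls n M).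
Local Notation g := (@g n M).
Local Notation tseq := (@tseq n M).
Local Notation nc := (@nc n M).
Local Notation wm := (@wm n M).
Local Notation wi := (@wi n M).
Local Notation w1 := (@w1 n M).
Local Notation cnj := (@cnj n M).

Lemma tseq_alt (s t : 'I_n) k :
  tseq (alt s t k) = map (fun i => cls (alt s t i.*2.+1)) (iota 0 k).
Proof.
elim: k s t => [|k IH] s t //.
rewrite (_ : alt s t k.+1 = s :: alt t s k) // [tseq _]/= IH.
rewrite (_ : iota 0 k.+1 = 0 :: map (addn 1) (iota 0 k)); last by rewrite -iotaDl.
rewrite map_cons -map_comp -map_comp; congr (_ :: _).
apply: eq_map => i; rewrite /comp /g cnj_cls.
rewrite (_ : (1 + i).*2.+1 = (i.*2.+1).+1.+1); last by rewrite add1n doubleS.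
rewrite (_ : alt s t (i.*2.+1).+2 = s :: alt t s (i.*2.+1).+1) //.
by rewrite [alt t s (i.*2.+1).+1]alt_rcons /= odd_double /= cats1.
Qed.

Lemma cls_alt_braid (s t : 'I_n) : s != t -> cls (alt s t (M s t)) = cls (alt t s (M s t)).
Proof. move=> st; apply: cls_weq; by have := @weq_braid n M [::] [::] s t st; rewrite /= !cats0. Qed.

Lemma cls_alt2m (s t : 'I_n) : s != t -> cls (alt s t (M s t).*2) = w1.
Proof.
move=> st; rewrite -addnn alt_add.
set m := M s t.
have -> : cls (alt s t m ++ (if odd m then alt t s m else alt s t m)) =
          cls (alt s t m ++ rev (alt s t m)).
  rewrite !cls_cat rev_alt; congr wm.
  by case: (odd m); rewrite // -cls_alt_braid.
apply: cls_weq; exact: weq_cancel.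
Qed.

Lemma wi_alt_odd (s t : 'I_n) j : wi (cls (alt s t j.*2.+1)) = cls (alt s t j.*2.+1).
Proof. by rewrite wi_cls rev_alt /= odd_double. Qed.

Lemma alt_refl_eq (s t : 'I_n) a b : s != t -> a + b + 1 = M s t ->
  cls (alt t s b.*2.+1) = cls (alt s t a.*2.+1).
Proof.
move=> st E.
have H : wm (cls (alt s t a.*2.+1)) (cls (alt t s b.*2.+1)) = w1.
  rewrite -cls_cat.
  have -> : alt s t a.*2.+1 ++ alt t s b.*2.+1 = alt s t (M s t).*2.
    have E2 : a.*2.+1 + b.*2.+1 = (M s t).*2 by rewrite -E; lia.
    by rewrite -E2 alt_add /= odd_double.
  exact: cls_alt2m.
by rewrite (wi_uniq H) wi_alt_odd.
Qed.

Lemma tseq_alt_rev (s t : 'I_n) : s != t ->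
  tseq (alt t s (M s t)) = rev (tseq (alt s t (M s t))).
Proof.
move=> st; rewrite !tseq_alt.
apply: (@eq_from_nth _ w1); first by rewrite size_rev !size_map.
move=> i; rewrite size_map size_iota => im.
rewrite nth_rev; last by rewrite size_map size_iota.
rewrite size_map size_iota !(nth_map 0) ?size_iota; try lia.
rewrite !nth_iota; try lia.
rewrite !add0n; apply: alt_refl_eq => //; lia.
Qed.

Lemma tseq_ss s v : tseq (s :: s :: v) = g s :: g s :: tseq v.
Proof.
rewrite /= cnj_g_g -map_comp; congr (_ :: _ :: _).
rewrite -{2}(map_id (tseq v)); apply: eq_map => x /=.
by rewrite -cnj_mul gg cnj1.
Qed.

Lemma nc_weq u v : weq u v -> forall t, odd (nc u t) = odd (nc v t).
Proof.
elim=> //.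
- by move=> u1 v1 w1' _ H1 _ H2 t; rewrite H1 H2.
- move=> u1 v1 s t; rewrite !nc_cat /nc tseq_ss /= !oddD.
  by case: (_ == _); case: (odd (count_mem t _)); case: (odd (count_mem _ (tseq v1))).
- move=> u1 v1 s t st tt; rewrite !nc_cat; congr (odd (_ + _)).
  rewrite cls_alt_braid //; congr (_ + _).
  by rewrite /nc tseq_alt_rev // count_rev.
Qed.

End Par.


Section Red.
Variable n : nat.
Variable M : 'I_n -> 'I_n -> nat.
Local Notation weq := (weq M).
Local Notation cls := (@cls n M).
Local Notation g := (@g n M).
Local Notation tseq := (@tseq n M).
Local Notation nc := (@nc n M).
Local Notation wm := (@wm n M).
Local Notation wi := (@wi n M).
Local Notation w1 := (@w1 n M).
Local Notation cnj := (@cnj n M).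

Lemma eqW u v : cls u = cls v -> weq u v.
Proof. by move/cls_eq. Qed.

Definition reduced (q : seq 'I_n) := forall v, weq q v -> size q <= size v.

Lemma reducedP q : reduced q <-> forall v, cls q = cls v -> size q <= size v.
Proof. by split=> H v E; apply: H; apply/cls_eq. Qed.

Lemma not_reduced q : ~ reduced q -> exists v, cls q = cls v /\ size v < size q.
Proof.
move=> H; apply: NNPP => H'; apply: H => v E.
case: (leqP (size q) (size v)) => // lt; case: H'; exists v; split => //.
exact: cls_weq.
Qed.

Lemma reduced_size u v : reduced u -> reduced v -> cls u = cls v -> size u = size v.
Proof.
move=> /reducedP Hu /reducedP Hv E; apply/eqP; rewrite eqn_leq Hu // Hv //.
Qed.

Lemma reduced_eq u v : reduced u -> cls u = cls v -> size u = size v -> reduced v.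
Proof.
move=> /reducedP Hu E S; apply/reducedP => w E'; rewrite -S; apply: Hu; by rewrite E.
Qed.

Lemma ex_reduced u : exists v, cls u = cls v /\ reduced v /\ size v <= size u.
Proof.
move: {2}(size u) (leqnn (size u)) => k; elim: k u => [|k IH] u Hu.
  exists u; split=> //; split=> // v _; by move: Hu; case: u.
case: (classic (reduced u)) => R; first by exists u.
have [v [E S]] := not_reduced R.
have Sv : size v <= k by lia.
have [w [E' [R' S']]] := IH v Sv.
exists w; split; [by rewrite E | split => //; lia].
Qed.

Lemma reduced_catl u v : reduced (u ++ v) -> reduced u.
Proof.
move=> R; apply: NNPP => R'; have [w [E S]] := not_reduced R'.
have := (proj1 (reducedP _) R) (w ++ v); rewrite !cls_cat E size_cat => /(_ erefl).
rewrite size_cat; lia.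
Qed.

Lemma reduced_catr u v : reduced (u ++ v) -> reduced v.
Proof.
move=> R; apply: NNPP => R'; have [w [E S]] := not_reduced R'.
have := (proj1 (reducedP _) R) (u ++ w); rewrite !cls_cat E size_cat => /(_ erefl).
rewrite size_cat; lia.
Qed.

Lemma reduced_rev u : reduced u -> reduced (rev u).
Proof.
move=> R v /weq_rev; rewrite revK => /R; by rewrite !size_rev.
Qed.

Lemma reduced_nil : reduced [::].
Proof. by []. Qed.

Lemma tseq_del z t : t \in tseq z ->
  exists i, i < size z /\ wm t (cls z) = cls (take i z ++ drop i.+1 z).
Proof.
elim: z t => [|s z IH] t //=; rewrite inE => /orP[/eqP->|].
  by exists 0; split => //; rewrite cls_cons wmA gg wm1l /= drop0.
case/mapP => t' /IH [i [lt E]] ->; exists i.+1; split => //.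
rewrite cls_cons /cnj wmA -(wmA _ (wi _)) wi_g gg wm1r -wmA E.
by rewrite /= -cls_cons.
Qed.

Lemma tseq_invol z t : t \in tseq z -> wm t t = w1.
Proof.
elim: z t => [|s z IH] t //=; rewrite inE => /orP[/eqP->|]; first exact: gg.
case/mapP => t' /IH E ->; rewrite /cnj wi_g.
by rewrite -!wmA (wmA (g s) (g s)) gg wm1l (wmA t') E wm1l gg.
Qed.

Lemma count_pos_in (t : Wt M) s : 0 < count_mem t s -> t \in s.
Proof. by rewrite -has_count has_pred1. Qed.

Lemma nc_rev a t : odd (nc (rev a) (cnj (wi (cls a)) t)) = odd (nc a t).
Proof.
have H := nc_weq (weq_cancel M a) t.
rewrite nc_cat oddD /= in H.
by move: H; case: (odd (nc a t)); case: (odd (nc (rev a) _)).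
Qed.

Definition rw (x : seq 'I_n) s := x ++ s :: rev x.

Lemma cls_rw x s : cls (rw x s) = cnj (cls x) (g s).
Proof. by rewrite /rw cnj_cls. Qed.

Lemma rev_rw x s : rev (rw x s) = rw x s.
Proof. by rewrite /rw rev_cat rev_cons revK -cats1 -catA. Qed.

Lemma rw_invol x s : wm (cls (rw x s)) (cls (rw x s)) = w1.
Proof.
have := wmV (cls (rw x s)); by rewrite wi_cls rev_rw.
Qed.

Lemma size_rw x s : size (rw x s) = (size x).*2.+1.
Proof. rewrite /rw size_cat /= size_rev; lia. Qed.

Lemma nc_rw x s : odd (nc (rw x s) (cls (rw x s))).
Proof.
rewrite /rw nc_cat -/(rw x s) cls_rw -cnj_mul wVm cnj1.
rewrite (_ : s :: rev x = [:: s] ++ rev x) // nc_cat /= wi_g cnj_g_g.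
rewrite /nc /= eqxx -/(nc _ _) addn0 -/(nc (rev x) (g s)).
have := nc_rev x (cnj (cls x) (g s)); rewrite -cnj_mul wVm cnj1 => H.
by rewrite !oddD H /=; case: (odd _).
Qed.

Lemma strong_exch p x s : reduced p -> ~~ odd (nc p (cls (rw x s))) ->
  forall z, cls z = cls (rw x s ++ p) -> size p < size z.
Proof.
move=> R ev z E.
have Hodd : odd (size z) = ~~ odd (size p).
  rewrite (weq_odd (eqW E)) size_cat size_rw oddD /= odd_double //.
case: (ltnP (size p) (size z)) => // le.
have lt : size z < size p.
  rewrite ltn_neqAle le andbT; apply/negP => /eqP ez; move: Hodd; rewrite ez.
  by case: (odd _).
set T := cls (rw x s).
have oz : odd (nc z T).
  rewrite (nc_weq (eqW E)) nc_cat oddD nc_rw.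
  have -> : cnj (wi T) T = T.
    by rewrite /T wi_cls rev_rw /cnj rw_invol wm1l wi_cls rev_rw.
  by move: ev; case: (odd _).
have Tin : T \in tseq z.
  apply: count_pos_in; move: oz; rewrite /nc; by case: (count_mem _ _).
have [i [iz E']] := tseq_del Tin.
rewrite E cls_cat wmA rw_invol wm1l in E'.
have := (proj1 (reducedP _) R) _ E'.
rewrite size_cat size_take size_drop iz; lia.
Qed.

Lemma exch q r : reduced q -> g r \notin tseq q -> reduced (r :: q).
Proof.
move=> R nin v Ev.
have := @strong_exch q [::] r R _ v.
rewrite /rw /= => /(_ _ (cls_weq (weq_sym Ev))).
have -> : nc q (g r) = 0 by apply/count_memPn.
by move=> /(_ erefl).
Qed.

Lemma exch' q r : reduced q -> ~ reduced (r :: q) -> g r \in tseq q.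
Proof. by move=> R NR; apply: NNPP => H; apply: NR; apply: exch => //; apply/negP. Qed.

Lemma w0_unique (N : nat) p d : (forall u, reduced u -> size u <= N) ->
  reduced p -> reduced d -> size p = N -> size d = N -> cls p = cls d.
Proof.
move=> bnd Rp Rd Sp Sd.
have A : forall x s, odd (nc p (cls (rw x s))).
  move=> x s; apply: NNPP => /negP ev.
  have [z [E [Rz Sz]]] := ex_reduced (rw x s ++ p).
  have := strong_exch Rp ev (esym E); have := bnd _ Rz; lia.
have B : forall x, reduced x -> exists z, cls (rev x ++ p) = cls z /\ size z + size x = N.
  elim/last_ind => [|x s IH] Rx.
    by exists p; split => //; rewrite addn0.
  have Rx' : reduced x by apply: reduced_catl (_ : reduced (x ++ [:: s])); rewrite cats1.
  have [z [E S]] := IH Rx'.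
  have Rz : reduced z.
    apply/reducedP => v Ev; apply: NNPP => /negP; rewrite -ltnNge => lt.
    have : cls p = cls (x ++ v).
      by rewrite cls_cat -Ev -E cls_cat wmA -wi_cls wmV wm1l.
    move/(proj1 (reducedP _) Rp); rewrite size_cat; lia.
  have oz : odd (nc z (g s)).
    rewrite -(nc_weq (eqW E)) nc_cat oddD wi_cls revK.
    rewrite -cls_rw A.
    have -> : odd (nc (rev x) (g s)) = false; last by [].
    apply: negbTE; apply/negP => o.
    have Sin : g s \in tseq (rev x).
      apply: count_pos_in; move: o; rewrite /nc; by case: (count_mem _ _).
    have := tseq_del Sin; case=> i [ix E'].
    have : reduced (rev (rcons x s)) by apply: reduced_rev.
    rewrite rev_rcons => /reducedP /(_ _ (_ : _ = cls (take i (rev x) ++ drop i.+1 (rev x)))).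
    rewrite -E' -cls_cons => /(_ erefl).
    rewrite size_cat size_take size_drop ix /=; lia.
  have Sin : g s \in tseq z.
    apply: count_pos_in; move: oz; rewrite /nc; by case: (count_mem _ _).
  have [i [iz E']] := tseq_del Sin.
  exists (take i z ++ drop i.+1 z); split.
    by rewrite rev_rcons cls_cons E E'.
  rewrite size_cat size_take size_drop iz size_rcons; lia.
have [z [E S]] := B d Rd.
have z0 : z = [::] by apply: size0nil; lia.
move: E; rewrite z0 cls_cat -wi_cls => /wm_invl; rewrite wiK => ->.
by rewrite wm1r.
Qed.

End Red.

Module GeoM.
Import GRing.Theory Num.Theory.

Local Open Scope ring_scope.

Definition zeta (m : nat) : algC :=
  if m is m'.+1 then sval (@C_prim_root_exists (m'.+1).*2 isT) else 1.

Lemma zetaP (m : nat) : (0 < m)%N -> (m.*2).-primitive_root (zeta m).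
Proof. case: m => // m _ /=; by case: C_prim_root_exists. Qed.

Section Zeta.
Variable m : nat.
Hypothesis m0 : (0 < m)%N.
Local Notation z := (zeta m).

Lemma z_pow i : (z ^+ i == 1) = (m.*2 %| i)%N.
Proof. by rewrite (prim_order_dvd (zetaP m0)). Qed.

Lemma z_2m : z ^+ m.*2 = 1.
Proof. by apply/eqP; rewrite z_pow dvdnn. Qed.

Lemma z_neq0 : z != 0.
Proof.
apply/negP => /eqP z0; have := z_2m; rewrite z0 expr0n.
rewrite (_ : (m.*2 == 0)%N = false); last by apply/negbTE; rewrite -lt0n double_gt0.
by move/eqP; rewrite eq_sym oner_eq0.
Qed.

Lemma z_m : z ^+ m = -1.
Proof.
have h : (z ^+ m - 1) * (z ^+ m + 1) = 0.
  by rewrite -subr_sqr expr1n -exprM muln2 z_2m subrr.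
move/eqP: h; rewrite mulf_eq0 => /orP[|].
  rewrite subr_eq0 z_pow => /dvdn_leq; rewrite -muln2; move/(_ m0) => h.
  exfalso; move: h m0; rewrite muln2; lia.
by rewrite addr_eq0 => /eqP.
Qed.

End Zeta.

Section Geo.
Variable n : nat.
Variable M : 'I_n -> 'I_n -> nat.
Hypothesis hM : coxeter_matrix M.

Definition tau (i j : 'I_n) : algC := zeta (M i j) + (zeta (M i j))^-1.
Definition B (i j : 'I_n) : algC := - tau i j / 2.

Lemma M_sym i j : M i j = M j i. Proof. by case: hM => _ []. Qed.
Lemma M_ii i : M i i = 1%N. Proof. by case: hM. Qed.
Lemma M_ge2 i j : i != j -> (2 <= M i j)%N. Proof. by case: hM => _ [] _; apply. Qed.
Lemma M_gt0 i j : (0 < M i j)%N.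
Proof. case: (eqVneq i j) => [->|/M_ge2]; [by rewrite M_ii | lia]. Qed.

Lemma B_sym i j : B i j = B j i. Proof. by rewrite /B /tau M_sym. Qed.

Lemma B_ii i : B i i = 1.
Proof.
rewrite /B /tau M_ii.
have h1 := z_2m (isT : (0 < 1)%N).
have hn := z_pow (isT : (0 < 1)%N) 1.
have zm := z_m (isT : (0 < 1)%N).
rewrite expr1 in zm; rewrite zm invrN invr1; by field.
Qed.

Definition vec := 'I_n -> algC.
Definition bil (i : 'I_n) (v : vec) : algC := \sum_j B i j * v j.
Definition e (k : 'I_n) : vec := fun j => (j == k)%:R.
Definition sig (i : 'I_n) (v : vec) : vec := fun j => v j - 2 * bil i v * e i j.
Fixpoint rho (q : seq 'I_n) (v : vec) : vec :=
  if q is i :: q' then sig i (rho q' v) else v.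

Lemma bil_add i (v w : vec) : bil i (fun j => v j + w j) = bil i v + bil i w.
Proof. by rewrite /bil -big_split; apply: eq_bigr => j _; rewrite mulrDr. Qed.

Lemma bil_scale i (v : vec) a : bil i (fun j => a * v j) = a * bil i v.
Proof. by rewrite /bil mulr_sumr; apply: eq_bigr => j _; rewrite mulrCA. Qed.

Lemma bil_e i k : bil i (e k) = B i k.
Proof.
rewrite /bil (bigD1 k) //= big1 ?addr0 /e ?eqxx ?mulr1 // => j /negbTE ->.
by rewrite mulr0.
Qed.

Lemma bil_ext i (v w : vec) : v =1 w -> bil i v = bil i w.
Proof. by move=> h; rewrite /bil; apply: eq_bigr => j _; rewrite h. Qed.

Lemma bil_sig i v : bil i (sig i v) = - bil i v.
Proof.
rewrite /sig (bil_ext i (_ : _ =1 fun j => v j + (- 2 * bil i v) * e i j)); last first.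
  by move=> j; ring.
by rewrite bil_add bil_scale bil_e B_ii; ring.
Qed.

Lemma sig_sig i v : sig i (sig i v) = v.
Proof.
apply: functional_extensionality => j.
rewrite {1}/sig bil_sig /sig; ring.
Qed.

Lemma rho_cat u w v : rho (u ++ w) v = rho u (rho w v).
Proof. by elim: u => //= i u ->. Qed.

Lemma rho_rev u v : rho (rev u) (rho u v) = v.
Proof.
elim: u v => //= i u IH v.
by rewrite rev_cons -cats1 rho_cat /= sig_sig IH.
Qed.

Lemma rho_alt_orth (s t : 'I_n) k (y q : vec) : bil s y = 0 -> bil t y = 0 ->
  rho (alt s t k) (fun j => y j + q j) = fun j => y j + rho (alt s t k) q j.
Proof.
move=> hs ht; elim: k s t hs ht => // k IH s' t' hs ht /=.
rewrite IH //; apply: functional_extensionality => j.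
rewrite /sig bil_add hs add0r; ring.
Qed.

Section Pair.
Variables s t : 'I_n.
Hypothesis st : s != t.
Local Notation c := (B s t).

Definition P (a b : algC) : vec := fun j => a * e s j + b * e t j.

Lemma bil_P i a b : bil i (P a b) = a * B i s + b * B i t.
Proof. by rewrite /P bil_add !bil_scale !bil_e. Qed.

Lemma sig_s_P a b : sig s (P a b) = P (- a - 2 * c * b) b.
Proof.
apply: functional_extensionality => j.
by rewrite /sig bil_P B_ii /P; ring.
Qed.

Lemma sig_t_P a b : sig t (P a b) = P a (- b - 2 * c * a).
Proof.
apply: functional_extensionality => j.
by rewrite /sig bil_P B_ii (B_sym t s) /P; ring.
Qed.

Definition L (p : algC * algC) : algC * algC :=
  ((4 * c ^+ 2 - 1) * p.1 + 2 * c * p.2, - 2 * c * p.1 - p.2).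

Lemma rho_alt2 k a b :
  rho (alt s t k.*2) (P a b) = P (iter k L (a, b)).1 (iter k L (a, b)).2.
Proof.
elim: k => //= k IH.
rewrite IH sig_t_P sig_s_P; congr P; rewrite /L /=; ring.
Qed.

Fixpoint U (k : nat) : algC :=
  match k with 0 => 0 | 1 => 1 | (k'.+1 as k1).+1 => (4 * c ^+ 2 - 2) * U k1 - U k' end.

Lemma iterL k p : iter k.+1 L p =
  (U k.+1 * (L p).1 - U k * p.1, U k.+1 * (L p).2 - U k * p.2).
Proof.
case: p => a b.
elim: k => [|k IH]; first by rewrite /= /L /=; congr pair; ring.
rewrite iterS IH; rewrite /L /=; congr pair; ring.
Qed.

Lemma U_closed (l mu : algC) : l * mu = 1 -> 4 * c ^+ 2 - 2 = l + mu ->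
  forall k, U k * (l - mu) = l ^+ k - mu ^+ k.
Proof.
move=> lm th.
suff : forall k, U k * (l - mu) = l ^+ k - mu ^+ k /\ U k.+1 * (l - mu) = l ^+ k.+1 - mu ^+ k.+1.
  by move=> h k; case: (h k).
elim=> [|k [IH1 IH2]]; first by split; rewrite /= ?expr0 ?expr1; ring.
split => //.
rewrite (_ : U k.+2 = (4 * c ^+ 2 - 2) * U k.+1 - U k) // th.
rewrite mulrBl -mulrA IH2 IH1 !exprS.
have E : forall X Y, (l + mu) * (l * X - mu * Y) - (X - Y) - (l * (l * X) - mu * (mu * Y))
   = (l * mu - 1) * (X - Y) by move=> X Y; ring.
by apply/eqP; rewrite -subr_eq0 E lm subrr mul0r.
Qed.

Local Notation m := (M s t).
Local Notation z := (zeta m).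

Lemma m_ge2 : (2 <= m)%N. Proof. exact: M_ge2. Qed.
Lemma m_gt0 : (0 < m)%N. Proof. have := m_ge2; lia. Qed.

Lemma c_def : c = - (z + z^-1) / 2. Proof. by []. Qed.

Lemma zn0 : z != 0. Proof. exact: z_neq0 m_gt0. Qed.

Lemma theta_eq : 4 * c ^+ 2 - 2 = z ^+ 2 + (z ^+ 2)^-1.
Proof. rewrite c_def; have := zn0 => h; by field. Qed.

Lemma lmu : z ^+ 2 * (z ^+ 2)^-1 = 1.
Proof. by rewrite mulfV // expf_neq0 // zn0. Qed.

Lemma z4 : z ^+ 4 = 1 -> m = 2%N.
Proof.
move/eqP; rewrite z_pow ?m_gt0 // => h.
have := dvdn_leq (isT : (0 < 4)%N) h; have := m_ge2; lia.
Qed.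

Lemma l_pow_m : (z ^+ 2) ^+ m = 1.
Proof. by rewrite -exprM mul2n z_2m // m_gt0. Qed.

Lemma mu_pow_m : ((z ^+ 2)^-1) ^+ m = 1.
Proof. by rewrite exprVn l_pow_m invr1. Qed.

Lemma m2_c0 : m = 2%N -> c = 0.
Proof.
move=> m2; have zm := z_m m_gt0; rewrite [X in _ ^+ X]m2 in zm.
have zi : z^-1 = - z.
  have h : z * (- z) = 1 by rewrite mulrN -expr2 zm opprK.
  by rewrite -(mulKf zn0 (- z)) h mulr1.
by rewrite c_def zi subrr oppr0 mul0r.
Qed.

Lemma l_neq_mu : (3 <= m)%N -> z ^+ 2 - (z ^+ 2)^-1 != 0.
Proof.
move=> m3; apply/negP; rewrite subr_eq0 => /eqP h.
have : z ^+ 4 = 1 by rewrite (_ : 4 = 2 + 2)%N // exprD {2}h lmu.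
move/z4; lia.
Qed.

Lemma Lm_id p : iter m L p = p.
Proof.
have := m_ge2; rewrite leq_eqVlt => /orP[/eqP m2|m3].
  rewrite -m2 /= /L (m2_c0 (esym m2)); case: p => a b /=; congr pair; ring.
have hl := l_neq_mu m3.
have Um : U m = 0.
  apply/eqP; rewrite -(mulIr_eq0 _ (mulIf hl)) U_closed ?lmu ?theta_eq //.
  by rewrite l_pow_m mu_pow_m subrr.
have Um1 : U m.-1 = -1.
  apply: (mulIf hl); rewrite U_closed ?lmu ?theta_eq //.
  have e1 : (z ^+ 2) ^+ m.-1 = (z ^+ 2)^-1.
    apply: (mulIf (_ : z ^+ 2 != 0)); first by rewrite expf_neq0 // zn0.
    rewrite -exprSr prednK ?m_gt0 // l_pow_m mulVf //.
    by rewrite expf_neq0 // zn0.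
  have e2 : ((z ^+ 2)^-1) ^+ m.-1 = z ^+ 2.
    by rewrite exprVn e1 invrK.
  rewrite e1 e2; ring.
have := iterL m.-1 p; rewrite prednK ?m_gt0 // => ->.
rewrite Um Um1; case: p => a b /=; congr pair; ring.
Qed.

Lemma c_nondeg : 1 - c ^+ 2 != 0.
Proof.
apply/negP => /eqP h.
have h2 : (z - z^-1) ^+ 2 = 0.
  have -> : (z - z^-1) ^+ 2 = - 4 * (1 - c ^+ 2).
    rewrite c_def; have := zn0 => hz; by field.
  by rewrite h mulr0.
move/eqP: h2; rewrite expf_eq0 /= subr_eq0 => /eqP h3.
have : z ^+ 2 = 1 by rewrite expr2 {2}h3 mulfV // zn0.
move/eqP; rewrite z_pow ?m_gt0 // => /dvdn_leq => /(_ isT); have := m_ge2; lia.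
Qed.

Lemma faithful_pair k : (0 < k < m)%N -> iter k L (1, 0) != (1, 0).
Proof.
case: k => // k /andP[_ km]; apply/negP => /eqP E.
move: E; rewrite iterL /L /= !mulr1 !mulr0 subr0 => [[E1 E2]].
case: (eqVneq c 0) => [c0|cn0].
  have hz : z ^+ 2 = -1.
    move: c0; rewrite c_def => /eqP; rewrite mulf_eq0 invr_eq0 pnatr_eq0 orbF oppr_eq0.
    rewrite addr_eq0 => /eqP h; by rewrite expr2 {1}h mulNr mulVf // zn0.
  have m2 : m = 2%N.
    by apply: z4; rewrite (_ : 4 = 2 * 2)%N // exprM hz expr2 mulN1r opprK.
  have k0 : k = 0%N by lia.
  move: E1; rewrite k0 c0 /=; move/eqP; rewrite -subr_eq0.
  have -> : 1 * (4 * 0 ^+ 2 - 1 + 0) - 0 - 1 = - 2 :> algC by ring.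
  by rewrite oppr_eq0 pnatr_eq0.
have Uk : U k.+1 = 0.
  rewrite subr0 in E2; apply/eqP; move/eqP: E2.
  rewrite mulf_eq0 => /orP[//|].
  rewrite (mulf_eq0 (-2)) oppr_eq0 pnatr_eq0 /= => h; by rewrite h in cn0.
change (U k.+1 * (4 * c ^+ 2 - 1 + 0) - U k = 1) in E1.
rewrite Uk mul0r sub0r in E1.
have Uk1 : U k = -1 by rewrite -E1 opprK.
have m3 : (3 <= m)%N.
  have := m_ge2; rewrite leq_eqVlt => /orP[/eqP m2|//].
  by move: cn0; rewrite (m2_c0 (esym m2)) eqxx.
have hl := l_neq_mu m3.
set l := z ^+ 2 in hl *; set mu := l^-1 in hl *.
have lm : l * mu = 1 by rewrite /mu /l lmu.
have th : 4 * c ^+ 2 - 2 = l + mu by rewrite theta_eq.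
have C1 := U_closed lm th k.+1; rewrite Uk mul0r in C1.
have C2 := U_closed lm th k; rewrite Uk1 in C2.
have lk : l ^+ k.+1 = mu ^+ k.+1 by apply/eqP; rewrite -subr_eq0 -C1.
have l2k : z ^+ (4 * k.+1) = 1.
  rewrite (_ : (4 * k.+1 = 2 * (k.+1 + k.+1))%N); last lia.
  by rewrite exprM -/l exprD {2}lk -exprMn lm expr1n.
move/eqP: l2k; rewrite z_pow ?m_gt0 // => dv.
have m2k : m = (2 * k.+1)%N.
  have : (m %| 2 * k.+1)%N by move: dv; rewrite -mul2n (_ : 4 * k.+1 = 2 * (2 * k.+1))%N ?dvdn_pmul2l //; lia.
  move=> /dvdnP [q hq]; have : (0 < q)%N by case: q hq => //; lia.
  case: q hq => // [[|q]] hq _; first by lia.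
  exfalso; move: km hq; lia.
have lk1 : l ^+ k.+1 = -1 by rewrite /l -exprM mul2n -muln2 mulnC -m2k z_m // m_gt0.
have muk1 : mu ^+ k.+1 = -1 by rewrite -lk.
have e1 : l ^+ k = - mu.
  by rewrite -[l ^+ k]mulr1 -lm mulrA -exprSr lk1 mulN1r.
have e2 : mu ^+ k = - l.
  by rewrite -[mu ^+ k]mulr1 -lm (mulrC l) mulrA -exprSr muk1 mulN1r.
rewrite e1 e2 in C2.
have : 2 * (l - mu) = 0.
  rewrite (_ : 2 * (l - mu) = (- mu - - l) - (-1 * (l - mu))); last by ring.
  by rewrite C2 subrr.
move/eqP; rewrite mulf_eq0 pnatr_eq0 /=; exact/negP.
Qed.

End Pair.

Lemma bil_sub i (v w : vec) : bil i (fun j => v j - w j) = bil i v - bil i w.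
Proof.
rewrite (bil_ext i (_ : _ =1 fun j => v j + (-1) * w j)); last by move=> j; ring.
by rewrite bil_add bil_scale; ring.
Qed.

Lemma rho_braid (s t : 'I_n) : s != t ->
  forall y, rho (alt s t (M s t)) y = rho (alt t s (M s t)) y.
Proof.
move=> st.
have id2 : forall y, rho (alt s t (M s t).*2) y = y.
  move=> y.
  pose c := B s t. pose x := bil s y. pose w := bil t y.
  have cn := c_nondeg st.
  pose a := (x - c * w) / (1 - c ^+ 2). pose b := (w - c * x) / (1 - c ^+ 2).
  pose y' := fun j => y j - P s t a b j.
  have hs : bil s y' = 0.
    rewrite /y' bil_sub bil_P B_ii -/x -/c /a /b; by field.
  have ht : bil t y' = 0.
    rewrite /y' bil_sub bil_P B_ii (B_sym t s) -/w -/c /a /b; by field.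
  have ey : y = fun j => y' j + P s t a b j.
    by apply: functional_extensionality => j; rewrite /y'; ring.
  have := rho_alt_orth (M s t).*2 (P s t a b) hs ht.
  rewrite rho_alt2 // Lm_id // /= -ey => ->; by [].
move=> y.
have H : forall y, rho (alt s t (M s t)) (rho (rev (alt t s (M s t))) y) = y.
  move=> y0; rewrite -rho_cat -{2}(id2 y0); congr rho.
  by rewrite -addnn alt_add rev_alt; case: (odd _).
by rewrite -{1}(rho_rev (alt t s (M s t)) y) H.
Qed.

Lemma rho_weq u v : weq M u v -> forall y, rho u y = rho v y.
Proof.
elim=> //.
- by move=> u1 v1 w1 _ H1 _ H2 y; rewrite H1 H2.
- by move=> u1 v1 s' y; rewrite !rho_cat /= sig_sig.
- by move=> u1 v1 s' t' st y; rewrite !rho_cat rho_braid.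
Qed.

Lemma faithful (s t : 'I_n) k : s != t -> (0 < k < M s t)%N -> ~ weq M (alt s t k.*2) [::].
Proof.
move=> st hk W.
have := rho_weq W (e s); rewrite /=.
have -> : e s = P s t 1 0.
  by apply: functional_extensionality => j; rewrite /P; ring.
rewrite rho_alt2 // => E.
have E1 := f_equal (fun f => f s) E; have E2 := f_equal (fun f => f t) E.
move: E1 E2; rewrite /P /e /= eqxx (eq_sym t s) (negbTE st) eqxx.
rewrite !mulr1 !mulr0 !addr0 !add0r => E1 E2.
have := faithful_pair st hk; rewrite (surjective_pairing (iter k (L s t) (1, 0))) E1 E2.
by rewrite eqxx.
Qed.

End Geo.

End GeoM.
Notation faithful := GeoM.faithful.
Notation M_gt0 := GeoM.M_gt0.
Notation M_sym := GeoM.M_sym.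

Lemma min_nat (P : nat -> Prop) k : P k -> exists k0, P k0 /\ forall k', P k' -> k0 <= k'.
Proof.
move: {2}k (leqnn k) => j; elim: j k => [|j IH] k hk Pk.
  by exists k; split => // k' _; move: hk; rewrite leqn0 => /eqP ->.
case: (classic (exists k', P k' /\ k' < k)) => [[k' [Pk' lt]]|H].
  apply: (IH k') => //; lia.
exists k; split => // k' Pk'; case: (leqP k k') => // lt; exfalso; apply: H; by exists k'.
Qed.

Section Mats.
Variable n : nat.
Variable M : 'I_n -> 'I_n -> nat.
Hypothesis hM : coxeter_matrix M.
Local Notation weq := (weq M).
Local Notation cls := (@cls n M).
Local Notation g := (@g n M).
Local Notation tseq := (@tseq n M).
Local Notation wm := (@wm n M).
Local Notation wi := (@wi n M).
Local Notation w1 := (@w1 n M).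
Local Notation cnj := (@cnj n M).
Local Notation reduced := (@reduced n M).

Lemma alt_reduced (s t : 'I_n) j : s != t -> j <= M s t -> reduced (alt s t j).
Proof.
elim: j s t => [|j IH] s t st hj; first exact: reduced_nil.
rewrite (_ : alt s t j.+1 = s :: alt t s j) //.
apply: exch; first by apply: IH; [rewrite eq_sym | rewrite (M_sym hM); lia].
apply/negP; rewrite tseq_alt => /mapP [i]; rewrite mem_iota add0n => /andP[_ ij] E.
apply: (faithful hM (k := i.+1) st); first by apply/andP; split => //; lia.
apply/cls_eq; rewrite (_ : alt s t (i.+1).*2 = [:: s] ++ alt t s i.*2.+1); last first.
  by rewrite doubleS.
by rewrite cls_cat -/(g s) -E gg.
Qed.

Section Lsec.
Variables s t : 'I_n.
Hypothesis st : s != t.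
Definition stw (x : seq 'I_n) := all (fun i => (i == s) || (i == t)) x.
Definition minimal (x : seq 'I_n) := forall x', stw x' -> cls x' = cls x -> size x <= size x'.

Lemma stw_take i x : stw x -> stw (take i x).
Proof. move=> /allP h; apply/allP => y /mem_take; exact: h. Qed.
Lemma stw_drop i x : stw x -> stw (drop i x).
Proof. move=> /allP h; apply/allP => y /mem_drop; exact: h. Qed.

Lemma stw_cat x y : stw (x ++ y) = stw x && stw y.
Proof. exact: all_cat. Qed.

Lemma minimal_tail r x : stw (r :: x) -> minimal (r :: x) -> minimal x.
Proof.
move=> /andP[hr hx] mn x' sx' E.
have := mn (r :: x'); rewrite /= hr sx' !cls_cons E /= => /(_ erefl erefl); lia.
Qed.

Lemma stw_alt k : stw (alt s t k) /\ stw (alt t s k).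
Proof.
elim: k => [|k [IH1 IH2]] //=; rewrite IH1 IH2 !eqxx /=; split => //; by rewrite orbT.
Qed.

Lemma alternating x : stw x -> minimal x -> x = alt s t (size x) \/ x = alt t s (size x).
Proof.
elim: x => [|r x IH] //=; first by left.
move=> /andP[hr hx] mn.
have hrx : stw (r :: x) by rewrite /= hr hx.
have [e|e] := IH hx (minimal_tail hrx mn).
- case: (size x) e => [|k] e; first by rewrite e; case/orP: hr => /eqP ->; [left|right].
  rewrite e /=; case/orP: hr => /eqP ehr.
  + exfalso; have := mn (alt t s k); rewrite (proj2 (stw_alt k)) e ehr => /(_ isT).
    move=> /(_ (cls_weq (weq_sym (weq_sq M [::] (alt t s k) s)))); rewrite /= size_alt; lia.
  + by right; rewrite ehr.
- case: (size x) e => [|k] e; first by rewrite e; case/orP: hr => /eqP ->; [left|right].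
  rewrite e /=; case/orP: hr => /eqP ehr.
  + by left; rewrite ehr.
  + exfalso; have := mn (alt s t k); rewrite (proj1 (stw_alt k)) e ehr => /(_ isT).
    move=> /(_ (cls_weq (weq_sym (weq_sq M [::] (alt s t k) t)))); rewrite /= size_alt; lia.
Qed.

Lemma alt_shorten (a b : 'I_n) r : a != b ->
  cls (alt a b ((M a b).+1 + r)) =
  cls (alt b a (M a b).-1 ++ (if odd (M a b).+1 then alt b a r else alt a b r)).
Proof.
move=> ab; rewrite alt_add !cls_cat; congr wm.
have m0 : 0 < M a b := M_gt0 hM a b.
rewrite (_ : alt a b (M a b).+1 = a :: alt b a (M a b)) // cls_cons.
rewrite {1}(M_sym hM a b) cls_alt_braid 1?eq_sym // -(M_sym hM a b).
rewrite -(prednK m0) /= cls_cons wmA gg wm1l; by [].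
Qed.

Lemma bounded x : stw x -> minimal x -> size x <= M s t.
Proof.
move=> sx mn; case: (leqP (size x) (M s t)) => // lt; exfalso.
have [e|e] := alternating sx mn.
- have [r er] : exists r, size x = (M s t).+1 + r by exists (size x - (M s t).+1); lia.
  rewrite e er in mn.
  have := mn _ _ (esym (alt_shorten r st)).
  rewrite size_cat !size_alt /=; case: (odd _); rewrite stw_cat ?size_alt;
    (have [h1 h2] := stw_alt (M s t).-1; have [h3 h4] := stw_alt r);
    rewrite ?h1 ?h2 ?h3 ?h4 /= => /(_ isT); have := M_gt0 hM s t; lia.
- have [r er] : exists r, size x = (M t s).+1 + r by exists (size x - (M t s).+1); rewrite (M_sym hM t s); lia.
  rewrite e er in mn.
  have ts : t != s by rewrite eq_sym.
  have := mn _ _ (esym (alt_shorten r ts)).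
  rewrite size_cat !size_alt /=; case: (odd _); rewrite stw_cat ?size_alt;
    (have [h1 h2] := stw_alt (M t s).-1; have [h3 h4] := stw_alt r);
    rewrite ?h1 ?h2 ?h3 ?h4 /= => /(_ isT); have := M_gt0 hM t s; lia.
Qed.

End Lsec.

Lemma stw_rev s t x : stw s t (rev x) = stw s t x.
Proof. exact: all_rev. Qed.

Lemma dihedral_prefix (s t : 'I_n) w : s != t -> reduced w ->
  ~ reduced (s :: w) -> ~ reduced (t :: w) ->
  exists y, cls w = cls (alt s t (M s t) ++ y) /\ M s t + size y = size w.
Proof.
move=> st Rw Ds Dt.
pose Pk k := exists x q, stw s t x /\ cls w = cls (x ++ q) /\ size q = k.
have P0 : Pk (size w) by exists [::], w.
have [k0 [[x0 [q0 [Sx0 [E0 Sq0]]]] mink]] := min_nat P0.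
have minq : forall x q, stw s t x -> cls w = cls (x ++ q) -> size q0 <= size q.
  move=> x q sx E; rewrite Sq0; apply: mink; by exists x, q.
have D : forall x r, stw s t x -> (r == s) || (r == t) -> g r \in tseq (x ++ q0) ->
   exists x'', stw s t x'' /\ cls (r :: x) = cls x'' /\ size x'' + 1 = size x.
  move=> x r sx hr; rewrite tseq_cat mem_cat => /orP[a|b].
  - have [i [ix E]] := tseq_del a.
    exists (take i x ++ drop i.+1 x); split; first by rewrite stw_cat stw_take ?stw_drop.
    split; first by rewrite cls_cons E.
    rewrite size_cat size_take size_drop ix; lia.
  - exfalso; case/mapP: b => tau tin egr.
    have [j [jq E]] := tseq_del tin.
    have tinv := tseq_invol tin.
    have etau : tau = cls (rev x ++ r :: x).
      by rewrite -[tau](cnjK (cls x)) -egr wi_cls /g cnj_cls revK.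
    have Eq0 : cls q0 = wm tau (cls (take j q0 ++ drop j.+1 q0)).
      by apply: (@wm_cancel_l _ _ tau); rewrite E wmA tinv wm1l.
    have := minq (x0 ++ rev x ++ r :: x) (take j q0 ++ drop j.+1 q0).
    rewrite !stw_cat Sx0 stw_rev sx /= hr sx => /(_ isT).
    rewrite E0 !cls_cat Eq0 etau !cls_cat !wmA => /(_ erefl).
    rewrite size_cat size_take size_drop jq; lia.
have C : forall x, stw s t x -> minimal s t x -> reduced (x ++ q0).
  elim => [|r x IH].
  - move=> _ _ /=; apply: NNPP => NR; have [v [E S]] := not_reduced NR.
    have := minq x0 v Sx0; rewrite E0 !cls_cat E => /(_ erefl); lia.
  - move=> sx mn; have /andP[hr hx] : ((r == s) || (r == t)) && stw s t x := sx.
    have mx := minimal_tail st sx mn.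
    apply: NNPP => NR; have := exch' (IH hx mx) NR.
    move/(D _ _ hx hr) => [x'' [sx'' [E S]]].
    have := mn x'' sx'' (esym E); rewrite /=; lia.
pose Qk k := exists x, stw s t x /\ cls x = cls x0 /\ size x = k.
have Q0 : Qk (size x0) by exists x0.
have [k1 [[x1 [Sx1 [E1 Sz1]]] minx]] := min_nat Q0.
have mn1 : minimal s t x1.
  move=> x' sx' E; rewrite Sz1; apply: minx; exists x'; split => //; split => //; by rewrite E.
have R1 : reduced (x1 ++ q0) := C x1 Sx1 mn1.
have Ew : cls w = cls (x1 ++ q0) by rewrite E0 !cls_cat E1.
have Sw : size w = size (x1 ++ q0) := reduced_size Rw R1 Ew.
have desc : forall r, (r == s) || (r == t) -> ~ reduced (r :: w) ->
    exists x'', stw s t x'' /\ cls (r :: x1) = cls x'' /\ size x'' + 1 = size x1.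
  move=> r hr Dr; apply: D Sx1 hr _; apply: exch' R1 _ => R'.
  apply: Dr; apply: reduced_eq R' _ _; first by rewrite !cls_cons Ew.
  by rewrite /= Sw.
have bd := bounded st Sx1 mn1.
have [e|e] := alternating st Sx1 mn1.
- have km : size x1 = M s t.
    apply/eqP; rewrite eqn_leq bd /= leqNgt; apply/negP => lt.
    have ht : (t == s) || (t == t) by rewrite eqxx orbT.
    have [x'' [_ [E S]]] := desc t ht Dt.
    have : reduced (t :: x1).
      rewrite e (_ : t :: alt s t (size x1) = alt t s (size x1).+1) //.
      apply: alt_reduced; [by rewrite eq_sym | rewrite (M_sym hM); lia].
    move/reducedP => /(_ _ E); rewrite /=; lia.
  exists q0; split; first by rewrite Ew e km.
  by rewrite Sw size_cat km.
- have km : size x1 = M s t.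
    apply/eqP; rewrite eqn_leq bd /= leqNgt; apply/negP => lt.
    have hs : (s == s) || (s == t) by rewrite eqxx.
    have [x'' [_ [E S]]] := desc s hs Ds.
    have : reduced (s :: x1).
      rewrite e (_ : s :: alt t s (size x1) = alt s t (size x1).+1) //.
      by apply: alt_reduced.
    move/reducedP => /(_ _ E); rewrite /=; lia.
  exists q0; split; first by rewrite Ew e km !cls_cat cls_alt_braid.
  by rewrite Sw size_cat km.
Qed.

Lemma aeq_catl (x u v : word n) : aeq M u v -> aeq M (x ++ u) (x ++ v).
Proof.
elim=> //.
- by move=> *; apply: aeq_refl.
- by move=> *; apply: aeq_sym.
- by move=> u1 v1 w1' _ H1 _ H2; apply: aeq_trans H1 H2.
- by move=> u1 v1 s b; rewrite !(catA x u1); apply: aeq_cancel.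
- by move=> u1 v1 s t st; rewrite !(catA x u1); apply: aeq_braid.
Qed.

Lemma pos_cat (p q : seq 'I_n) : pos (p ++ q) = pos p ++ pos q.
Proof. exact: map_cat. Qed.

Lemma matsumoto k : forall p q, size p = k -> reduced p -> reduced q -> cls p = cls q ->
  aeq M (pos p) (pos q).
Proof.
elim: k => [|k IH] p q Sp Rp Rq E.
  have Sq := reduced_size Rp Rq E.
  have -> : p = [::] by apply: size0nil.
  have -> : q = [::] by apply: size0nil; rewrite -Sq.
  exact: aeq_refl.
have Sq := reduced_size Rp Rq E.
case: p Sp Rp E Sq => // s p' [Sp'] Rp E Sq.
case: q Rq E Sq => // t q' Rq E [Sq'].
have Rp' : reduced p' by apply: (@reduced_catr _ _ [:: s]).
have Rq' : reduced q' by apply: (@reduced_catr _ _ [:: t]).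
case: (eqVneq s t) => [est|st].
  subst t; have E' : cls p' = cls q' by apply: (@wm_cancel_l _ _ (g s)); rewrite -!cls_cons.
  by apply: (@aeq_catl [:: (s, true)]); apply: IH.
have Ds : ~ reduced (s :: s :: p').
  move/reducedP => /(_ p'); rewrite (cls_weq (weq_sq M [::] p' s)) => /(_ erefl) /=; lia.
have Dt : ~ reduced (t :: s :: p').
  have eq : cls (t :: s :: p') = cls q'.
    rewrite cls_cons E -cls_cons; exact: cls_weq (weq_sq M [::] q' t).
  move/reducedP => /(_ q' eq) /=; lia.
have [y [Ey Sy]] := dihedral_prefix st Rp Ds Dt.
have m0 := M_gt0 hM s t.
have ealt : forall a b, alt a b (M s t) = a :: alt b a (M s t).-1.
  by move=> a b; rewrite -(prednK m0).
have Ry : reduced (alt s t (M s t) ++ y).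
  by apply: reduced_eq Rp Ey _; rewrite size_cat size_alt /= Sy.
have Ry' : reduced (alt t s (M s t) ++ y).
  apply: reduced_eq Ry _ _; first by rewrite !cls_cat cls_alt_braid.
  by rewrite !size_cat !size_alt.
have A1 : aeq M (pos (s :: p')) (pos (alt s t (M s t) ++ y)).
  rewrite ealt /=; apply: (@aeq_catl [:: (s, true)]); apply: IH => //.
  - by move: Ry; rewrite ealt => /(@reduced_catr _ _ [:: s]).
  - by apply: (@wm_cancel_l _ _ (g s)); rewrite -!cls_cons Ey ealt.
have A2 : aeq M (pos (t :: q')) (pos (alt t s (M s t) ++ y)).
  rewrite ealt /=; apply: (@aeq_catl [:: (t, true)]); apply: IH => //.
  - by rewrite -Sq'.
  - by move: Ry'; rewrite ealt => /(@reduced_catr _ _ [:: t]).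
  - apply: (@wm_cancel_l _ _ (g t)); rewrite -!cls_cons -E Ey -cat_cons -ealt.
    by rewrite !cls_cat cls_alt_braid.
have A3 : aeq M (pos (alt s t (M s t) ++ y)) (pos (alt t s (M s t) ++ y)).
  by rewrite !pos_cat; have := aeq_braid M [::] (pos y) st.
exact: aeq_trans (aeq_trans A1 A3) (aeq_sym A2).
Qed.

Definition forget (w : word n) : seq 'I_n := map fst w.

Lemma forget_pos p : forget (pos p) = p.
Proof. by rewrite /forget /pos -map_comp map_id. Qed.

Lemma aeq_forget u v : aeq M u v -> weq (forget u) (forget v).
Proof.
elim=> //.
- by move=> *; apply: weq_refl.
- by move=> *; apply: weq_sym.
- by move=> u1 v1 w1' _ H1 _ H2; apply: weq_trans H1 H2.
- by move=> u1 v1 s b; rewrite /forget !map_cat /=; apply: weq_sq.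
- by move=> u1 v1 s t st; rewrite /forget !map_cat -!/(forget (pos _)) !forget_pos; apply: weq_braid.
Qed.

End Mats.


Lemma index_sorted (a : seq nat) y : sorted ltn a -> y \in a -> index y a = count (fun x => x < y) a.
Proof.
elim: a => //= x a IH srt; rewrite inE => /orP[/eqP->|ya].
  rewrite eqxx ltnn add0n; apply/eqP; rewrite eq_sym -leqn0 leqNgt -has_count.
  apply/negP => /hasP [z za]; have := order_path_min ltn_trans srt.
  by move=> /allP /(_ z za); lia.
have xy : x < y by have := order_path_min ltn_trans srt => /allP /(_ y ya).
rewrite (_ : (x == y) = false); last by lia.
by rewrite xy IH // (path_sorted srt).
Qed.

Lemma rot_lemma (N c : nat) (a : seq nat) : 0 < N -> c < N -> sorted ltn a -> all (fun x => x < N) a ->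
  (forall x, x \in a -> (x + c) %% N \in a) ->
  exists r, forall i, i < size a -> index ((nth 0 a i + c) %% N) a = (i + r) %% size a.
Proof.
move=> N0 cN srt aN closed.
set T := fun x => (x + c) %% N.
have ua : uniq a by apply: (sorted_uniq ltn_trans) srt => x; rewrite ltnn.
have Tinj : {in a &, injective T}.
  move=> x y xa ya; rewrite /T => /eqP; rewrite eqn_modDr.
  have := allP aN x xa; have := allP aN y ya => yN xN.
  by rewrite !modn_small // => /eqP.
have uT : uniq (map T a) by rewrite map_inj_in_uniq.
have sub : {subset map T a <= a} by move=> y /mapP [x xa ->]; apply: closed.
have szm : size a <= size (map T a) by rewrite size_map.
have [_ eqm] := uniq_min_size uT sub szm.
have pm : perm_eq (map T a) a by apply: uniq_perm.
set k := size a.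
set p := count (fun x => x + c < N) a.
exists (k - p) => i ik.
set y := nth 0 a i.
have ya : y \in a by apply: mem_nth.
have yN : y < N by apply: (allP aN).
have ci : count (fun x => x < y) a = i by rewrite -index_sorted // index_uniq.
rewrite index_sorted //; last by apply: closed.
rewrite -/(T y) (_ : count (fun x => x < T y) a = count (fun x => x < T y) (map T a)); last first.
  by apply/esym/permP.
rewrite count_map.
have Tx : forall x, x < N -> T x = if x + c < N then x + c else x + c - N.
  move=> x xN; rewrite /T; case: ifP => h; first by rewrite modn_small.
  rewrite (_ : x + c = (x + c - N) + N); last by lia.
  rewrite modnDr modn_small; lia.
have pk : p <= k by rewrite /p count_size.
case: (ltnP (y + c) N) => hy.
- have E : count (fun x => T x < T y) a = count (fun x => (x < y) || (N <= x + c)) a.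
    apply: eq_in_count => x xa; have xN := allP aN x xa; rewrite /= !Tx //.
    rewrite hy; case: ifP => hx; lia.
  have E2 : count (fun x => (x < y) || (N <= x + c)) a = i + (k - p).
    have := count_predUI (fun x => x < y) (fun x => N <= x + c) a.
    have -> : count (predI (fun x => x < y) (fun x => N <= x + c)) a = 0.
      apply/eqP; rewrite -leqn0 leqNgt -has_count; apply/hasP => [[x _]] /=; lia.
    have := count_predC (fun x => x + c < N) a.
    rewrite (eq_count (a1 := predC (fun x => x + c < N)) (a2 := fun x => N <= x + c)); last first.
      by move=> x /=; lia.
    rewrite ci -/p -/k addn0 => h1 h2.
    transitivity (count (predU (fun x => x < y) (fun x => N <= x + c)) a); first by [].
    lia.
  have ip : i < p.
    have : count (fun x => x <= y) a <= p.
      by rewrite /p; apply: sub_count => x /=; lia.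
    have : count (fun x => x <= y) a = i.+1.
      have := count_predUI (fun x => x < y) (pred1 y) a.
      rewrite (eq_count (a1 := predU _ _) (a2 := fun x => x <= y)); last by move=> x /=; lia.
      rewrite (eq_count (a1 := predI _ _) (a2 := pred0)); last by move=> x /=; lia.
      rewrite count_pred0 addn0 ci (count_uniq_mem _ ua) ya => ->; lia.
    lia.
  rewrite E E2 modn_small //; lia.
- have E : count (fun x => T x < T y) a = count (fun x => (x < y) && (N <= x + c)) a.
    apply: eq_in_count => x xa; have xN := allP aN x xa; rewrite /= !Tx //.
    rewrite (_ : (y + c < N) = false); last by lia.
    case: ifP => hx; lia.
  have E2 : count (fun x => (x < y) && (N <= x + c)) a = i - p.
    have := count_predUI (fun x => x < y) (fun x => N <= x + c) a.
    rewrite (eq_count (a1 := predU _ _) (a2 := predT)); last by move=> x /=; lia.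
    rewrite count_predT -/k ci.
    have := count_predC (fun x => x + c < N) a.
    rewrite (eq_count (a1 := predC (fun x => x + c < N)) (a2 := fun x => N <= x + c)); last first.
      by move=> x /=; lia.
    rewrite -/p -/k => h1 h2.
    rewrite (eq_count (a1 := fun x => (x < y) && (N <= x + c)) (a2 := predI (fun x => x < y) (fun x => N <= x + c))) //.
    lia.
  have pi : p <= i.
    rewrite /p -ci; apply: sub_count => x /=; lia.
  rewrite E E2; rewrite (_ : i + (k - p) = (i - p) + k); last by lia.
  rewrite modnDr modn_small //; lia.
Qed.


Section Main.
Variable n : nat.
Variable M : 'I_n -> 'I_n -> nat.
Variable d : seq 'I_n.
Local Notation N := (size d).

Definition wt (w : word n) : nat := foldr (fun x acc => (if x.2 then 1 else N.-1) + acc) 0 w.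

Lemma wt_cat u v : wt (u ++ v) = wt u + wt v.
Proof. by elim: u => //= x u ->; rewrite addnA. Qed.

Lemma wt_pos p : wt (pos p) = size p.
Proof. by elim: p => //= x p ->; rewrite add1n. Qed.

Lemma wt_rev u : wt (rev u) = wt u.
Proof. elim: u => //= x u IH; rewrite rev_cons -cats1 wt_cat IH /=; lia. Qed.

Hypothesis N0 : 0 < N.

Lemma aeq_wt u v : aeq M u v -> wt u = wt v %[mod N].
Proof.
elim=> //.
- by move=> u1 v1 w1 _ -> _ ->.
- move=> u1 v1 s b; rewrite !wt_cat /=.
  have -> : (if b then 1 else N.-1) + ((if ~~ b then 1 else N.-1) + wt v1) = wt v1 + N.
    by case: b => /=; lia.
  by rewrite addnA modnDr.
- by move=> u1 v1 s t _; rewrite !wt_cat !wt_pos !size_alt.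
Qed.

Lemma wt_dpow k : wt (dpow d k) = k * N.
Proof.
elim: k => //= k IH; rewrite /dpow /= wt_cat -/(dpow d k) IH wt_pos; lia.
Qed.

Lemma wt_winv x : wt (winv x) + wt x = size x * N.
Proof.
rewrite /winv wt_rev; elim: x => //= y x IH.
have -> : (if (~~ y.2) then 1 else N.-1) + wt [seq (x0.1, ~~ x0.2) | x0 <- x] +
   ((if y.2 then 1 else N.-1) + wt x) = N + (wt [seq (x0.1, ~~ x0.2) | x0 <- x] + wt x).
  by case: y.2 => /=; lia.
by rewrite IH mulSn.
Qed.

Lemma veq_wt x y : veq M d x y -> wt x = wt y %[mod N].
Proof.
case=> k [/aeq_wt|/aeq_wt]; rewrite wt_cat wt_dpow => H.
  by rewrite H -modnDmr modnMl addn0.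
by rewrite H -modnDmr modnMl addn0.
Qed.

End Main.

Section Main2.
Variable n : nat.
Variable M : 'I_n -> 'I_n -> nat.
Variable d : seq 'I_n.
Hypothesis hM : coxeter_matrix M.
Hypothesis hD : isDelta M d.
Local Notation N := (size d).
Local Notation reduced := (@reduced n M).
Local Notation cls := (@cls n M).

Lemma wlen_red p : wlen M p (size p) -> reduced p.
Proof. by case. Qed.

Lemma red_wlen p : reduced p -> wlen M p (size p).
Proof. by move=> R; split => //; exists p; split => //; apply: weq_refl. Qed.

Lemma bound u : reduced u -> size u <= N.
Proof. by move/red_wlen; case: hD => _; apply. Qed.

Lemma count_pos_t (w : seq 'I_n) : count (fun x : letter n => x.2) (pos w) = size w.
Proof. by elim: w => //= x w ->. Qed.
Lemma count_pos_f (w : seq 'I_n) : count (fun x : letter n => ~~ x.2) (pos w) = 0.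
Proof. by elim: w => //= x w ->. Qed.

Lemma zdeg_size p q : aeq M (pos p) (pos q) -> size p = size q.
Proof.
move=> h.
suff : forall u v, aeq M u v -> (count (fun x : letter n => x.2) u + count (fun x : letter n => ~~ x.2) v
                                = count (fun x : letter n => x.2) v + count (fun x : letter n => ~~ x.2) u)%N.
  move=> /(_ _ _ h); rewrite !count_pos_t !count_pos_f; lia.
move=> u v; elim => //.
- by move=> u1 v1 w1 _ H1 _ H2; lia.
- by move=> u1 v1 s b; rewrite !count_cat /=; case: b => /=; lia.
- by move=> u1 v1 s t _; rewrite !count_cat !count_pos_t !count_pos_f !size_alt; lia.
Qed.

Lemma red_d : reduced d.
Proof.
case: hD => [[p0 [h /wlen_red R0]]] _.
apply: (reduced_eq R0); last by rewrite (zdeg_size h).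
apply: cls_weq; apply: weq_sym.
by have := aeq_forget h; rewrite !forget_pos.
Qed.

Lemma key p : reduced p -> size p = N -> aeq M (pos p) (pos d).
Proof.
move=> Rp Sp.
apply: (matsumoto hM (k := size p)) => //; first exact: red_d.
apply: (w0_unique (N := N)) => //; [exact: bound | exact: red_d].
Qed.

Lemma dat1 u v : d_at M d u v 1 -> exists q, [/\ 0 < q, q < N & wt d (winv u ++ v) = q %[mod N]].
Proof.
case=> h [As [_ [hv [[hf hn] [hA sA]]]]].
case: As sA hf hn hA => // A [] // _ hf hn hA.
have [atA [nA _]] := hn 0 isT.
case: atA => p [Ap /wlen_red Rp].
have pN := bound Rp.
have p0 : 0 < size p.
  case: p Ap Rp {pN} => // Ap _; exfalso; exact: nA Ap.
have N0 : 0 < N by lia.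
have pN' : size p != N.
  apply/eqP => e; apply: (hA A (mem_head _ _)); apply: aeq_trans Ap (key Rp e).
exists (size p); split => //; first by lia.
rewrite (veq_wt N0 hv) (aeq_wt N0 hf) /= cats0 (aeq_wt N0 Ap) wt_pos.
by [].
Qed.

End Main2.

Theorem lemma4p7 (n : nat) (M : 'I_n -> 'I_n -> nat) (d : seq 'I_n)
    (sigma : seq (word n)) :
  coxeter_matrix M -> finite_type M -> isDelta M d -> simplex M d sigma ->
  exists l : seq (word n), perm_eq l sigma /\
    forall g : word n, stab M d g sigma ->
      exists r, forall i, i < size l ->
        veq M d (g ++ nth [::] l i) (nth [::] l ((i + r) %% size l)).
Proof.
move=> hM _ hD hs.
case: (leqP (size sigma) 1) => hsz.
  exists sigma; split => // g [hg _]; exists 0 => i il.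
  have i0 : i = 0 by lia.
  subst i; rewrite addn0 mod0n.
  case: sigma hs hsz il hg => // x [] // _ _ _ hg.
  by have [y] := hg x (mem_head _ _); rewrite inE => /eqP ->.
have h01 : (0 : nat) != 1 by [].
have [_ hd01] := hs 0 1 (ltnW hsz) hsz h01.
have [q [q0 qN _]] := dat1 hM hD hd01.
have N0 : 0 < size d by lia.
pose phi := fun x => wt d x %% size d.
have sep : forall i j, i < size sigma -> j < size sigma -> i != j ->
    phi (nth [::] sigma i) != phi (nth [::] sigma j).
  move=> i j il jl ij; apply/eqP => e.
  have [_ hd] := hs i j il jl ij.
  have [q' [q'0 q'N hq]] := dat1 hM hD hd.
  move: hq; rewrite wt_cat -modnDmr -/(phi (nth [::] sigma j)) -e /phi modnDmr.
  rewrite wt_winv // modnMl (modn_small q'N) => h; move: q'0; by rewrite -h.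
have inj : {in sigma &, injective phi}.
  move=> x y xs ys e; apply: NNPP => xy.
  have ij : index x sigma != index y sigma.
    apply/negP => /eqP e'; apply: xy.
    by rewrite -(nth_index [::] xs) -(nth_index [::] ys) e'.
  have ix : index x sigma < size sigma by rewrite index_mem.
  have iy : index y sigma < size sigma by rewrite index_mem.
  have := sep _ _ ix iy ij.
  by rewrite !nth_index // e eqxx.
pose l := sort (fun x y => phi x <= phi y) sigma.
have pl : perm_eq l sigma by rewrite perm_sort.
have injl : {in l &, injective phi}.
  by move=> x y xl yl; apply: inj; rewrite -(perm_mem pl).
exists l; split => // g [hg _].
pose a := map phi l.
have sa : sorted ltn a.
  rewrite ltn_sorted_uniq_leq; apply/andP; split.
    rewrite map_inj_in_uniq // (perm_uniq pl).
    apply/(uniqP [::]) => i j il jl e.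
    apply: NNPP => ij; move/eqP: ij => ij.
    by have := sep i j il jl ij; rewrite e eqxx.
  rewrite sorted_map; apply: sort_sorted => x y; exact: leq_total.
have aN : all (fun x => x < size d) a.
  by apply/allP => x /mapP [y _ ->]; apply: ltn_pmod.
pose c := phi g.
have cN : c < size d by apply: ltn_pmod.
have phiz : forall y z, veq M d (g ++ y) z -> phi z = (phi y + c) %% size d.
  move=> y z hz; rewrite /phi /c modnDm -(veq_wt N0 hz) wt_cat; by rewrite addnC.
have closed : forall x, x \in a -> (x + c) %% size d \in a.
  move=> x /mapP [y yl ->].
  have ys : y \in sigma by rewrite -(perm_mem pl).
  have [z zs hz] := hg y ys.
  rewrite -(phiz _ _ hz); apply: map_f; by rewrite (perm_mem pl).
have [r hr] := rot_lemma N0 cN sa aN closed.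
exists r => i il.
have nil : nth [::] l i \in sigma by rewrite -(perm_mem pl) mem_nth.
have [z zs hz] := hg _ nil.
have := hr i; rewrite size_map => /(_ il).
rewrite (nth_map [::]) // -(phiz _ _ hz) => <-.
rewrite nth_index_map //; by rewrite (perm_mem pl).
Qed.
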